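(* Let $G$ be a finite connected weighted graph with $N$ vertices, let $0=\lambda_0<\lambda_1\le\cdots\le\lambda_{N-1}$ be the eigenvalues (with multiplicity) of its weighted Laplacian $L_w$ on $\ell^2(G)$, and let $\mathcal{S}=(S_m)_{m=0,\ldots,n}$ be a partition of $V(G)$ with $K_m(\mathcal{S})>0$ for all $m=0,\ldots,n-1$. Then \[ \mathcal{N}\left[0,\ (2\delta_{\mathcal{S},2}^2)^{-1}\right)\le|S_0| \quad\text{and}\quad \mathcal{N}\left[(2\delta_{\mathcal{S},2}^2)^{-1},\ \lambda_{N-1}\right]\ge N-|S_0|. \]
   Context: $G$ has vertex set $V(G)$ and symmetric weights $w:V(G)\times V(G)\to[0,\infty)$ with $w(u,u)=0$; connected means the graph with edges $\{(u,v):w(u,v)>0\}$ is connected. Vertex weight $\nu\equiv1$. $(L_wf)(v)=\sum_{u}(f(v)-f(u))w(v,u)$. For an interval $I$, $\mathcal{N}I$ is the number of eigenvalues of $L_w$ in $I$ counted with multiplicity. $w_A(v)=\sum_{u\in A}w(u,v)$; $D_m=\sup_{v\in S_m}w_{S_{m+1}}(v)$, $K_m=\inf_{v\in S_{m+1}}w_{S_m}(v)$, and $\delta_{\mathcal{S},2}=\left(\sum_{m=1}^n\sum_{k=1}^m\frac{1}{K_{k-1}}\prod_{i=k}^{m-1}\frac{D_i}{K_i}\right)^{1/2}$ (empty products $=1$, empty sums $=0$, and $(2\delta_{\mathcal{S},2}^2)^{-1}=+\infty$ if $\delta_{\mathcal{S},2}=0$). *)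

(* Defs.v *)
From HB Require Import structures.
From mathcomp Require Import all_boot all_order all_algebra.
From mathcomp Require Import polyrcf.
From mathcomp Require Import reals.
Set Implicit Arguments. Unset Strict Implicit. Unset Printing Implicit Defensive.
Import Order.TTheory GRing.Theory Num.Theory.
Local Open Scope ring_scope.

Section GraphDefs.
Variables (R : realType) (V : finType).

(* minimum / maximum of f over a finite set A (meaningful for A nonempty; 0 on the empty set) *)
Definition finmin (A : {set V}) (f : V -> R) : R :=
  if [pick v in A] is Some v0 then \big[Num.min/f v0]_(v in A) f v else 0.
Definition finmax (A : {set V}) (f : V -> R) : R :=
  if [pick v in A] is Some v0 then \big[Num.max/f v0]_(v in A) f v else 0.

Definition weight_ok (w : V -> V -> R) : Prop :=
  [/\ forall u v, w u v = w v u, forall u v, 0 <= w u v & forall u, w u u = 0].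

Definition connected_w (w : V -> V -> R) : Prop :=
  forall u v, connect (fun x y => 0 < w x y) u v.

Definition wset (w : V -> V -> R) (A : {set V}) (v : V) : R := \sum_(u in A) w u v.

(* matrix of L_w (vertex weight 1) in the basis of indicator functions, indexed via enum_val *)
Definition laplacian (w : V -> V -> R) : 'M[R]_#|V| :=
  \matrix_(i, j) ((i == j)%:R * (\sum_u w (enum_val i) u) - w (enum_val i) (enum_val j)).

Definition eig_count (w : V -> V -> R) (I : R -> bool) : nat :=
  \sum_(x <- rootsR (char_poly (laplacian w)) | I x) mup x (char_poly (laplacian w)).

(* largest eigenvalue lambda_{N-1} (rootsR is sorted increasingly) *)
Definition lambda_max (w : V -> V -> R) : R := last 0 (rootsR (char_poly (laplacian w))).

(* partition S_0,...,S_n given by a surjective map part : V -> 'I_(n+1) ; S_m = part^-1(m) *)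
Definition Spart (n : nat) (part : V -> 'I_n.+1) (m : nat) : {set V} :=
  [set v | val (part v) == m].

Definition Dm (w : V -> V -> R) n (part : V -> 'I_n.+1) (m : nat) : R :=
  finmax (Spart part m) (wset w (Spart part m.+1)).
Definition Km (w : V -> V -> R) n (part : V -> 'I_n.+1) (m : nat) : R :=
  finmin (Spart part m.+1) (wset w (Spart part m)).

Definition delta2sq (w : V -> V -> R) n (part : V -> 'I_n.+1) : R :=
  \sum_(1 <= m < n.+1) \sum_(1 <= k < m.+1)
     (Km w part k.-1)^-1 * \prod_(k <= i < m) (Dm w part i / Km w part i).

End GraphDefs.

(* Main.v *)
Require Import Defs.
From HB Require Import structures.
From mathcomp Require Import all_boot all_order all_algebra.
From mathcomp Require Import polyrcf complex spectral sesquilinear.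
From mathcomp Require Import reals.
From mathcomp Require Import ring lra zify.
Import Order.TTheory GRing.Theory Num.Theory.
Set Implicit Arguments. Unset Strict Implicit. Unset Printing Implicit Defensive.
Local Open Scope ring_scope.

Section Hardy.
Variables (R : realType) (V : finType) (w : V -> V -> R) (n : nat) (part : V -> 'I_n.+1).
Hypothesis wok : weight_ok w.
Hypothesis surj : forall m : 'I_n.+1, exists v, part v = m.
Hypothesis Kpos : forall m, (m.+1 <= n)%N -> 0 < Km w part m.

Local Notation S := (Spart part).
Local Notation K := (Km w part).
Local Notation D := (Dm w part).

Lemma w_ge0 u v : 0 <= w u v. Proof. by case: wok. Qed.
Lemma w_sym u v : w u v = w v u. Proof. by case: wok. Qed.

Lemma inS v m : (v \in S m) = (val (part v) == m).
Proof. by rewrite /Spart inE. Qed.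

Lemma finmax_ge (A : {set V}) (f : V -> R) v : v \in A -> f v <= finmax A f.
Proof.
rewrite /finmax => vA; case: pickP => [v0 _|]; last by move=> /(_ v); rewrite vA.
by rewrite (bigD1 v) //= le_max lexx.
Qed.

Lemma finmin_le (A : {set V}) (f : V -> R) v : v \in A -> finmin A f <= f v.
Proof.
rewrite /finmin => vA; case: pickP => [v0 _|]; last by move=> /(_ v); rewrite vA.
by rewrite (bigD1 v) //= ge_min lexx.
Qed.

Lemma S_ne m : (m <= n)%N -> exists v, v \in S m.
Proof.
move=> mn; have [v pv] := surj (Ordinal (mn : (m < n.+1)%N)).
by exists v; rewrite inS pv.
Qed.

Lemma wset_ge0 A v : 0 <= wset w A v.
Proof. by apply: sumr_ge0 => u _; apply: w_ge0. Qed.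

Lemma D_ge0 m : (m <= n)%N -> 0 <= D m.
Proof.
move=> /S_ne [v vS]; rewrite /Dm; apply: le_trans (wset_ge0 (S m.+1) v) _; exact: finmax_ge.
Qed.

Definition Y m := \sum_(1 <= k < m.+1) (K k.-1)^-1 * \prod_(k <= i < m) (D i / K i).

Lemma Y0 : Y 0 = 0. Proof. by rewrite /Y big_geq. Qed.

Lemma Y_rec m : Y m.+1 = (K m)^-1 + D m / K m * Y m.
Proof.
rewrite /Y big_nat_recr //= [X in _ + _ * X]big_geq // mulr1 addrC; congr (_ + _).
rewrite mulr_sumr; apply: eq_big_nat => k /andP[_ km].
by rewrite (@big_nat_recr _ _ _ m k _ km) /= [RHS]mulrC -[RHS]mulrA.
Qed.

Lemma Y_ge0 m : (m <= n)%N -> 0 <= Y m.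
Proof.
elim: m => [|m IH] mn; first by rewrite Y0.
have Km0 := Kpos mn.
rewrite Y_rec; apply: addr_ge0; first by rewrite invr_ge0 ltW.
apply: mulr_ge0; last by apply: IH; exact: ltnW.
by apply: divr_ge0; [apply: D_ge0; exact: ltnW | exact: ltW].
Qed.

Lemma d2_Y : delta2sq w part = \sum_(1 <= m < n.+1) Y m.
Proof. by []. Qed.

Lemma d2_ge0 : 0 <= delta2sq w part.
Proof.
rewrite d2_Y big_seq_cond; apply: sumr_ge0 => m /andP[].
by rewrite mem_index_iota => /andP[_ mn] _; apply: Y_ge0.
Qed.

Lemma d2_gt0 : (1 <= n)%N -> 0 < delta2sq w part.
Proof.
move=> n1; rewrite d2_Y big_ltn // Y_rec Y0 mulr0 addr0.
apply: ltr_wpDr; last by rewrite invr_gt0 Kpos.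
rewrite big_seq_cond; apply: sumr_ge0 => m /andP[].
by rewrite mem_index_iota => /andP[_ mn] _; apply: Y_ge0.
Qed.


Section HardyF.
Variable f : V -> R.
Hypothesis f0 : forall v, v \in S 0 -> f v = 0.

Definition F m := \sum_(v in S m) f v ^+ 2.
Definition E m := \sum_(u in S m.-1) \sum_(v in S m) w u v * (f v - f u) ^+ 2.
Definition Es m := \sum_(1 <= k < m.+1) E k.

Lemma E_ge0 m : 0 <= E m.
Proof.
apply: sumr_ge0 => u _; apply: sumr_ge0 => v _.
by apply: mulr_ge0; [exact: w_ge0 | exact: sqr_ge0].
Qed.

Lemma Es_ge0 m : 0 <= Es m.
Proof. by apply: sumr_ge0 => k _; exact: E_ge0. Qed.

Lemma Es_rec m : Es m.+1 = Es m + E m.+1.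
Proof. by rewrite /Es big_nat_recr. Qed.

Lemma Es_mono m p : (m <= p)%N -> Es m <= Es p.
Proof.
elim: p => [|p IH]; first by rewrite leqn0 => /eqP ->.
rewrite leq_eqVlt => /orP[/eqP -> //|]; rewrite ltnS => /IH h.
by rewrite Es_rec; apply: le_trans h _; rewrite lerDl E_ge0.
Qed.

Lemma F0 : F 0 = 0.
Proof. by rewrite /F big1 // => v /f0 ->; rewrite expr0n. Qed.

Lemma step m : (m < n)%N -> F m <= Y m * Es m -> F m.+1 <= Y m.+1 * Es m.+1.
Proof.
move=> mn IH.
set rho := D m * Y m.
have rho0 : 0 <= rho.
  by apply: mulr_ge0; [apply: D_ge0; exact: ltnW | apply: Y_ge0; exact: ltnW].
have Kp := Kpos mn.
have A1 : K m * F m.+1 <= \sum_(v in S m.+1) \sum_(u in S m) w u v * f v ^+ 2.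
  rewrite /F mulr_sumr; apply: ler_sum => v vS.
  rewrite -mulr_suml; apply: ler_wpM2r; first exact: sqr_ge0.
  by rewrite /Km; apply: finmin_le.
have A2 : \sum_(v in S m.+1) \sum_(u in S m) w u v * f u ^+ 2 <= rho * Es m.
  rewrite exchange_big /=.
  apply: (@le_trans _ _ (\sum_(u in S m) D m * f u ^+ 2)).
    apply: ler_sum => u uS; rewrite -mulr_suml; apply: ler_wpM2r; first exact: sqr_ge0.
    have -> : \sum_(i in S m.+1) w u i = wset w (S m.+1) u.
      by apply: eq_bigr => i _; rewrite w_sym.
    by rewrite /Dm; apply: finmax_ge.
  rewrite -mulr_sumr /rho -mulrA; apply: ler_wpM2l => //.
  by apply: D_ge0; exact: ltnW.
have key : K m * F m.+1 <= (1 + rho) * Es m.+1.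
  apply/ler_addgt0Pr => e e0.
  have Es1 : 0 < Es m.+1 + 1 by apply: ltr_wpDl; [exact: Es_ge0 | exact: ltr01].
  set r := rho + e / (Es m.+1 + 1).
  have er0 : 0 < e / (Es m.+1 + 1) by apply: divr_gt0.
  have r0 : 0 < r by apply: ltr_wpDl.
  have rr : rho <= r by rewrite lerDl ltW.
  have A3 : forall u v, r * (w u v * f v ^+ 2) <=
      r * (1 + r) * (w u v * (f v - f u) ^+ 2) + (1 + r) * (w u v * f u ^+ 2).
    move=> u v; rewrite -subr_ge0.
    have -> : r * (1 + r) * (w u v * (f v - f u) ^+ 2) + (1 + r) * (w u v * f u ^+ 2)
        - r * (w u v * f v ^+ 2) = w u v * (r * (f v - f u) - f u) ^+ 2 by ring.
    by apply: mulr_ge0; [exact: w_ge0 | exact: sqr_ge0].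
  have A4 : r * (K m * F m.+1) <= r * ((1 + r) * Es m.+1).
    apply: le_trans (ler_wpM2l (ltW r0) A1) _.
    rewrite mulr_sumr.
    apply: (@le_trans _ _ (\sum_(v in S m.+1) \sum_(u in S m)
        (r * (1 + r) * (w u v * (f v - f u) ^+ 2) + (1 + r) * (w u v * f u ^+ 2)))).
      apply: ler_sum => v _; rewrite mulr_sumr; apply: ler_sum => u _; exact: A3.
    have -> : \sum_(v in S m.+1) \sum_(u in S m)
        (r * (1 + r) * (w u v * (f v - f u) ^+ 2) + (1 + r) * (w u v * f u ^+ 2))
      = r * (1 + r) * E m.+1 + (1 + r) * \sum_(v in S m.+1) \sum_(u in S m) w u v * f u ^+ 2.
      have -> : E m.+1 = \sum_(v in S m.+1) \sum_(u in S m) w u v * (f v - f u) ^+ 2.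
        by rewrite /E /= exchange_big.
      rewrite !mulr_sumr -big_split /=.
      by apply: eq_bigr => v _; rewrite !mulr_sumr -big_split.
    rewrite Es_rec mulrA [X in _ <= X]mulrDr addrC lerD2r.
    rewrite [r * (1 + r)]mulrC -mulrA; apply: ler_wpM2l; first by rewrite addr_ge0 // ltW.
    apply: le_trans A2 _; apply: ler_wpM2r => //; exact: Es_ge0.
  have A5 : K m * F m.+1 <= (1 + r) * Es m.+1 by rewrite -(ler_pM2l r0).
  apply: le_trans A5 _.
  have h : e / (Es m.+1 + 1) * Es m.+1 <= e.
    rewrite mulrAC ler_pdivrMr //; rewrite mulrDr mulr1 lerDl ltW //.
  by rewrite /r addrA mulrDl lerD2l.
rewrite Y_rec.
have -> : (K m)^-1 + D m / K m * Y m = (1 + rho) / K m.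
  by rewrite /rho; field; rewrite gt_eqF.
by rewrite mulrAC ler_pdivlMr // mulrC.
Qed.


Lemma F_bound m : (m <= n)%N -> F m <= Y m * Es m.
Proof.
elim: m => [|m IH] mn; first by rewrite F0 Y0 mul0r.
by apply: step => //; apply: IH; exact: ltnW.
Qed.

Lemma sum_part (h : V -> R) :
  \sum_v h v = \sum_(0 <= m < n.+1) \sum_(v in S m) h v.
Proof.
rewrite (partition_big part predT) //= big_mkord.
apply: eq_bigr => j _; apply: eq_bigl => v; by rewrite inS.
Qed.

Lemma sum_F : \sum_v f v ^+ 2 = \sum_(1 <= m < n.+1) F m.
Proof. by rewrite sum_part big_ltn // -/(F 0) F0 add0r. Qed.

Definition G u v := w u v * (f u - f v) ^+ 2.
Definition H v := \sum_u ((val (part u)).+1 == val (part v))%:R * G u v.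

Lemma G_ge0 u v : 0 <= G u v.
Proof. by apply: mulr_ge0; [exact: w_ge0 | exact: sqr_ge0]. Qed.

Lemma G_sym u v : G u v = G v u.
Proof. by rewrite /G w_sym -sqrrN opprB. Qed.

Lemma Es_H : Es n = \sum_v H v.
Proof.
rewrite sum_part big_ltn // big1 ?add0r; last first.
  move=> v vS; rewrite /H big1 // => u _; move: vS; rewrite inS => /eqP ->; by rewrite /= mul0r.
apply: eq_big_nat => k /andP[k1 _].
rewrite /E exchange_big; apply: eq_bigr => v vS.
rewrite (big_mkcond (fun u => u \in S k.-1)) /=; apply: eq_bigr => u _.
move: vS; rewrite !inS => /eqP ->.
have -> : ((val (part u)).+1 == k) = (val (part u) == k.-1) by case: k k1.
by case: ifP => _; rewrite ?mul1r ?mul0r // /G -sqrrN opprB.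
Qed.

Lemma Es_half : 2 * Es n <= \sum_u \sum_v w u v * (f u - f v) ^+ 2.
Proof.
have -> : \sum_u \sum_v w u v * (f u - f v) ^+ 2 = \sum_v \sum_u G u v.
  by rewrite exchange_big.
have eq2 : \sum_v H v = \sum_v \sum_u ((val (part v)).+1 == val (part u))%:R * G u v.
  rewrite /H exchange_big /=; apply: eq_bigr => v _; apply: eq_bigr => u _.
  by rewrite G_sym.
rewrite Es_H mulr2n mulrDl mul1r {2}eq2 /H -big_split /=.
apply: ler_sum => v _; rewrite -big_split /=; apply: ler_sum => u _.
rewrite -mulrDl; apply: ler_piMl; first exact: G_ge0.
case: eqP => [e1|_]; case: eqP => [e2|_] //=; rewrite ?addr0 ?add0r //.
exfalso; lia.
Qed.

Lemma hardy : 2 * \sum_v f v ^+ 2 <=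
  delta2sq w part * \sum_u \sum_v w u v * (f u - f v) ^+ 2.
Proof.
apply: (@le_trans _ _ (delta2sq w part * (2 * Es n))); last first.
  by apply: ler_wpM2l; [exact: d2_ge0 | exact: Es_half].
rewrite mulrCA; apply: ler_wpM2l => //.
rewrite sum_F d2_Y mulr_suml; apply: ler_sum_nat => m /andP[_ mn].
apply: le_trans (F_bound mn) _.
apply: ler_wpM2l; first by apply: Y_ge0; exact: mn.
by apply: Es_mono; exact: mn.
Qed.

End HardyF.

End Hardy.

Local Open Scope sesquilinear_scope.

Lemma char_poly_conj (F : fieldType) n (P B : 'M[F]_n) : P \in unitmx ->
  char_poly (invmx P *m B *m P) = char_poly B.
Proof.
move=> Pu; rewrite /char_poly.
set Q := map_mx (@polyC F) P; set Qi := map_mx (@polyC F) (invmx P).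
have QiQ : Qi *m Q = 1%:M by rewrite -map_mxM mulVmx // map_mx1.
have -> : char_poly_mx (invmx P *m B *m P) = Qi *m char_poly_mx B *m Q.
  rewrite /char_poly_mx mulmxBr mulmxBl -!map_mxM; congr (_ - _).
  by rewrite scalar_mxC -mulmxA QiQ mulmx1.
by rewrite !det_mulmx mulrAC -det_mulmx QiQ det1 mul1r.
Qed.

Lemma sum_eqb_uniq (T : eqType) (t : seq T) y : uniq t ->
  (\sum_(x <- t) (y == x) = (y \in t))%N.
Proof.
elim: t => [|z t IH]; first by rewrite big_nil.
rewrite /= big_cons in_cons => /andP[zt ut]; rewrite IH //.
by case: eqP => // ->; rewrite (negbTE zt).
Qed.

Lemma sum_count_uniq (T : eqType) (t s : seq T) (I : pred T) :
  uniq t -> {subset s <= t} ->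
  (\sum_(x <- t | I x) count_mem x s = count I s)%N.
Proof.
move=> ut; elim: s => [|y s IH] sub; first by rewrite big1.
rewrite /= big_split /= IH; last by move=> x xs; apply: sub; rewrite in_cons xs orbT.
congr (_ + _)%N; rewrite -big_filter sum_eqb_uniq ?filter_uniq //.
by rewrite mem_filter sub ?andbT // mem_head.
Qed.

Section Lin.
Variables (R : realType) (V : finType) (w : V -> V -> R).
Hypothesis wok : weight_ok w.
Local Notation N := #|V|.
Local Notation C := R[i].
Local Notation toC := (real_complex R).

Definition AC := map_mx toC (laplacian w).
Definition Pm := spectralmx AC.
Definition Xd := spectral_diag AC.
Definition rr (i : 'I_N) : R := complex.Re (Xd 0 i).

Lemma w_symL u v : w u v = w v u. Proof. by case: wok. Qed.

Lemma lap_sym : (laplacian w)^T = laplacian w.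
Proof.
apply/matrixP => i j; rewrite !mxE w_symL eq_sym.
by case: eqP => [->|]; rewrite ?mul0r.
Qed.

Lemma AC_herm : AC \is hermsymmx.
Proof.
apply/is_hermitianmxP; rewrite expr0 scale1r; apply/matrixP => i j.
rewrite !mxE conj_Creal; last by apply/complex_realP; eexists.
by have /matrixP/(_ j i) := lap_sym; rewrite !mxE => ->.
Qed.

Lemma Pm_unitary : Pm \is unitarymx.
Proof. exact: spectral_unitarymx. Qed.

Lemma AC_eq : AC = Pm^t* *m diag_mx Xd *m Pm.
Proof.
rewrite -invmx_unitary; last exact: Pm_unitary.
by apply/orthomx_spectralP; apply: hermitian_normalmx; exact: AC_herm.
Qed.

Lemma Xd_real i : toC (rr i) = Xd 0 i.
Proof.
rewrite /rr RRe_real //.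
by have /mxOverP := hermitian_spectral_diag_real AC_herm; apply.
Qed.

Lemma char_lap : char_poly (laplacian w) = \prod_(i < N) ('X - (rr i)%:P).
Proof.
apply: (map_poly_inj toC).
rewrite map_char_poly -/AC map_prod_XsubC.
rewrite AC_eq -invmx_unitary ?Pm_unitary // char_poly_conj; last first.
  exact/unitarymx_unit/Pm_unitary.
rewrite char_poly_trig ?diag_mx_is_trig //; apply: eq_bigr => i _.
by rewrite mxE eqxx mulr1n; congr (_ - _%:P); exact: (esym (Xd_real i)).
Qed.

Definition rseq := [seq rr i | i <- enum 'I_N].

Lemma char_lap_seq : char_poly (laplacian w) = \prod_(x <- rseq) ('X - x%:P).
Proof. by rewrite char_lap big_map big_enum. Qed.

Lemma eig_count_eq (I : pred R) : eig_count w I = count I rseq.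
Proof.
rewrite /eig_count char_lap_seq.
set p := \prod_(x <- rseq) ('X - x%:P).
have p0 : p != 0 by rewrite monic_neq0 // monic_prod_XsubC.
under eq_bigr do rewrite mu_prod_XsubC.
apply: sum_count_uniq; first exact: uniq_roots.
move=> x xs; rewrite -roots_on_rootsR // root_prod_XsubC xs andbT.
by rewrite in_itv.
Qed.

Definition qfC (u : 'rV[C]_N) := (u *m AC *m u^t*) 0 0.
Definition nrmC (u : 'rV[C]_N) := (u *m u^t*) 0 0.

Lemma qf_diag (b : 'rV[C]_N) : (b *m Pm) *m AC *m (b *m Pm)^t* = b *m diag_mx Xd *m b^t*.
Proof.
have PU := Pm_unitary.
by rewrite AC_eq trmx_mul map_mxM !mulmxA !mulmxtVK.
Qed.

Lemma nrm_diag (b : 'rV[C]_N) : (b *m Pm) *m (b *m Pm)^t* = b *m b^t*.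
Proof. by rewrite trmx_mul map_mxM mulmxA mulmxtVK // Pm_unitary. Qed.

Lemma toC_le (x y : R) : (toC x <= toC y) = (x <= y). Proof. exact: lecR. Qed.
Lemma toC_lt (x y : R) : (toC x < toC y) = (x < y). Proof. exact: ltcR. Qed.

Definition beta (b : 'rV[C]_N) i : R := complex.Re (`|b 0 i| ^+ 2).

Lemma betaE (b : 'rV[C]_N) i : toC (beta b i) = b 0 i * (b 0 i)^*.
Proof.
rewrite /beta RRe_real; first by rewrite normCK.
by rewrite rpredX // normr_real.
Qed.

Lemma beta_ge0 (b : 'rV[C]_N) i : 0 <= beta b i.
Proof. by rewrite -toC_le betaE rmorph0 -normCK exprn_ge0. Qed.

Lemma beta_gt0 (b : 'rV[C]_N) i : b 0 i != 0 -> 0 < beta b i.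
Proof. by move=> h; rewrite -toC_lt betaE rmorph0 -normCK exprn_gt0 // normr_gt0. Qed.

Lemma qf_entries (b : 'rV[C]_N) : qfC (b *m Pm) = toC (\sum_i rr i * beta b i).
Proof.
rewrite /qfC qf_diag mxE rmorph_sum; apply: eq_bigr => i _.
rewrite mul_mx_diag !mxE -Xd_real -[RHS]/(toC (rr i * beta b i)).
have -> : toC (rr i * beta b i) = toC (rr i) * toC (beta b i) by exact: rmorphM.
rewrite betaE; ring.
Qed.

Lemma nrm_entries (b : 'rV[C]_N) : nrmC (b *m Pm) = toC (\sum_i beta b i).
Proof.
rewrite /nrmC nrm_diag mxE rmorph_sum; apply: eq_bigr => i _.
by rewrite -[RHS]/(toC (beta b i)) betaE !mxE.
Qed.

Definition wc (i j : 'I_N) : C := toC (w (enum_val i) (enum_val j)).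
Definition dC (i : 'I_N) : C := toC (\sum_v w (enum_val i) v).
Definition T1 (u : 'rV[C]_N) := \sum_i dC i * (u 0 i * (u 0 i)^*).
Definition T2 (u : 'rV[C]_N) := \sum_i \sum_j wc i j * (u 0 i * (u 0 j)^*).

Lemma sum_delta (F : 'I_N -> C) j : \sum_i (i == j)%:R * F i = F j.
Proof.
rewrite (bigD1 j) //= eqxx mul1r big1 ?addr0 // => i /negbTE ->.
by rewrite mul0r.
Qed.

Lemma qf_T (u : 'rV[C]_N) : qfC u = T1 u - T2 u.
Proof.
rewrite /qfC mxE /T1 /T2.
transitivity (\sum_j (dC j * (u 0 j * (u 0 j)^*) -
                      \sum_i wc i j * (u 0 i * (u 0 j)^*))).
  apply: eq_bigr => j _; rewrite !mxE mulr_suml.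
  rewrite (eq_bigr (fun i => (i == j)%:R * (dC i * (u 0 i * (u 0 j)^*))
                           - wc i j * (u 0 i * (u 0 j)^*))); last first.
    move=> i _; rewrite !mxE /dC /wc. ring.
  by rewrite sumrB sum_delta.
by rewrite sumrB; congr (_ - _); exact: exchange_big.
Qed.

Lemma wc_sym i j : wc i j = wc j i.
Proof. by rewrite /wc w_symL. Qed.

Lemma dC_sum i : dC i = \sum_j wc i j.
Proof.
rewrite /dC /wc (reindex (@enum_val V predT)) /=; last first.
  by apply: onW_bij; exact: enum_val_bij.
by rewrite rmorph_sum.
Qed.

Lemma form_T (u : 'rV[C]_N) :
  \sum_i \sum_j wc i j * `|u 0 i - u 0 j| ^+ 2 = 2 * (T1 u - T2 u).
Proof.
transitivity (\sum_i \sum_j (wc i j * (u 0 i * (u 0 i)^*) + wc i j * (u 0 j * (u 0 j)^*)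
   - wc i j * (u 0 i * (u 0 j)^*) - wc i j * (u 0 j * (u 0 i)^*))).
  apply: eq_bigr => i _; apply: eq_bigr => j _; rewrite normCK rmorphB /=; ring.
have Sa : \sum_i \sum_j wc i j * (u 0 i * (u 0 i)^*) = T1 u.
  by apply: eq_bigr => i _; rewrite -mulr_suml dC_sum.
have Sb : \sum_i \sum_j wc i j * (u 0 j * (u 0 j)^*) = T1 u.
  rewrite exchange_big; apply: eq_bigr => j _; rewrite -mulr_suml dC_sum.
  by congr (_ * _); apply: eq_bigr => i _; rewrite wc_sym.
have Sd : \sum_i \sum_j wc i j * (u 0 j * (u 0 i)^*) = T2 u.
  rewrite exchange_big; apply: eq_bigr => j _; apply: eq_bigr => i _.
  by rewrite wc_sym.
transitivity (\sum_i \sum_j wc i j * (u 0 i * (u 0 i)^*) +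
  \sum_i \sum_j wc i j * (u 0 j * (u 0 j)^*) - T2 u -
  \sum_i \sum_j wc i j * (u 0 j * (u 0 i)^*)).
  rewrite /T2 -big_split /= -!sumrB; apply: eq_bigr => i _.
  by rewrite -big_split /= -!sumrB.
rewrite Sa Sb Sd; ring.
Qed.

End Lin.

Lemma half_contra (F : realFieldType) (x : F) : 0 <= x -> x < x / 2 -> False.
Proof. move=> h1 h2; lra. Qed.

Section Main.
Variables (R : realType) (V : finType) (w : V -> V -> R) (n : nat) (part : V -> 'I_n.+1).
Hypothesis wok : weight_ok w.
Hypothesis surj : forall m : 'I_n.+1, exists v, part v = m.
Hypothesis Kpos : forall m, (m.+1 <= n)%N -> 0 < Km w part m.
Local Notation N := #|V|.
Local Notation C := R[i].
Local Notation toC := (real_complex R).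

Lemma sum_rank (F : 'I_N -> C) : \sum_i F i = \sum_v F (enum_rank v).
Proof.
rewrite (reindex (@enum_rank V)) //=.
by apply: onW_bij; exact: enum_rank_bij.
Qed.

Lemma hardyC (u : 'rV[C]_N) :
  (forall v, v \in Spart part 0 -> u 0 (enum_rank v) = 0) ->
  nrmC u <= toC (delta2sq w part) * qfC w u.
Proof.
move=> u0.
pose g v := complex.Re `|u 0 (enum_rank v)|.
have gE v : toC (g v) = `|u 0 (enum_rank v)|.
  by rewrite /g RRe_real // normr_real.
have g0 v : v \in Spart part 0 -> g v = 0.
  by move=> /u0 h; rewrite /g h normr0.
have Hh := hardy wok surj Kpos g0.
rewrite -toC_le in Hh.
have E1 : toC (\sum_v g v ^+ 2) = nrmC u.
  rewrite /nrmC mxE rmorph_sum (sum_rank (fun j => u 0 j * (u^t*) j 0)); apply: eq_bigr => v _.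
  by rewrite !mxE rmorphXn /= gE normCK.
have E2 : toC (\sum_a \sum_b w a b * (g a - g b) ^+ 2) <= 2 * qfC w u.
  rewrite qf_T // -form_T // (sum_rank (fun i => \sum_j wc w i j * `|u 0 i - u 0 j| ^+ 2)).
  rewrite rmorph_sum; apply: ler_sum => a _.
  rewrite (sum_rank (fun j => wc w (enum_rank a) j * `|u 0 (enum_rank a) - u 0 j| ^+ 2)).
  rewrite rmorph_sum; apply: ler_sum => b _.
  rewrite /wc !enum_rankK rmorphM /=; apply: ler_wpM2l.
    by rewrite -[0](rmorph0 toC) toC_le; case: wok => _ h _; apply: h.
  rewrite rmorphXn rmorphB /= !gE.
  have hr : `|u 0 (enum_rank a)| - `|u 0 (enum_rank b)| \is Num.real.
    by rewrite rpredB // normr_real.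
  rewrite -(real_normK hr) !expr2.
  by apply: ler_pM => //; apply: ler_dist_dist.
have L1 : toC (2 * \sum_v g v ^+ 2) = 2 * nrmC u.
  by rewrite -E1 rmorphM rmorph_nat.
have L2 : toC (delta2sq w part * \sum_a \sum_b w a b * (g a - g b) ^+ 2) =
    toC (delta2sq w part) * toC (\sum_a \sum_b w a b * (g a - g b) ^+ 2).
  by rewrite rmorphM.
rewrite L1 L2 in Hh.
have d0 : 0 <= toC (delta2sq w part).
  by rewrite -[0](rmorph0 toC) toC_le; apply: d2_ge0.
have H3 := le_trans Hh (ler_wpM2l d0 E2).
rewrite mulrCA in H3.
by rewrite -(ler_pM2l (ltr0Sn _ 1)).
Qed.


Lemma qfC_ge0 (u : 'rV[C]_N) : 0 <= qfC w u.
Proof.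
have h : 0 <= 2 * qfC w u.
  rewrite qf_T // -form_T //; apply: sumr_ge0 => i _; apply: sumr_ge0 => j _.
  apply: mulr_ge0; last by rewrite exprn_ge0.
  by rewrite /wc -[0](rmorph0 toC) toC_le; case: wok => _ hw _; apply: hw.
by rewrite pmulr_rge0 // in h.
Qed.

Lemma rr_ge0 i : 0 <= rr w i.
Proof.
pose b : 'rV[C]_N := \row_j ((j == i)%:R).
have := qfC_ge0 (b *m Pm w); rewrite (qf_entries wok).
rewrite (bigD1 i) //= big1 ?addr0; last first.
  move=> j /negbTE hj; rewrite /beta mxE hj normr0 expr0n /=.
  by rewrite mulr0.
rewrite /beta mxE eqxx normr1 expr1n /= mulr1 => h.
have : toC 0 <= toC (rr w i) by rewrite rmorph0.
by rewrite toC_le.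
Qed.

Lemma count_card (P : pred 'I_N) : count P (enum 'I_N) = #|[set i | P i]|.
Proof. by rewrite -sum1_count -sum1dep_card big_enum_cond. Qed.

Lemma key_count : (1 <= n)%N ->
  (#|[set i : 'I_N | (rr w i < (2 * delta2sq w part)^-1)%R]| <= #|Spart part 0|)%N.
Proof.
move=> n1.
set c := (2 * delta2sq w part)^-1.
set J := [set i : 'I_N | rr w i < c].
set S0 := Spart part 0.
rewrite leqNgt; apply/negP => hlt.
pose M : 'M[C]_(#|J|, #|S0|) :=
  \matrix_(j, l) Pm w (enum_val j) (enum_rank (enum_val l)).
have rk : (0 < \rank (kermx M))%N.
  by rewrite mxrank_ker subn_gt0 (leq_ltn_trans (rank_leq_col M) hlt).
have [j0 hj0] : exists j0, row j0 (kermx M) != 0.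
  case: (pickP (fun j => row j (kermx M) != 0)) => [j0 h|h]; first by exists j0.
  move: rk; rewrite lt0n mxrank_eq0 => /negP; case; apply/eqP/row_matrixP => j.
  by rewrite row0; move: (h j) => /negbFE/eqP.
set a := row j0 (kermx M).
have aM : a *m M = 0 by rewrite -row_mul mulmx_ker row0.
have [j1 aj1] : exists j1, a 0 j1 != 0.
  case: (pickP (fun j => a 0 j != 0)) => [j1 h|h]; first by exists j1.
  case/negP: hj0; apply/eqP/rowP => j.
  by move: (h j) => /negbFE/eqP ->; rewrite mxE.
pose b : 'rV[C]_N := \row_i \sum_(j < #|J|) a 0 j * (enum_val j == i)%:R.
have bE j : b 0 (enum_val j) = a 0 j.
  rewrite mxE (bigD1 j) //= eqxx mulr1 big1 ?addr0 // => j' /negbTE hj'.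
  by rewrite (inj_eq enum_val_inj) hj' mulr0.
have b0 i : i \notin J -> b 0 i = 0.
  move=> iJ; rewrite mxE big1 // => j _.
  have := enum_valP j; case: eqP => [-> |_ _]; last by rewrite mulr0.
  by rewrite (negbTE iJ).
set u := b *m Pm w.
have u0 v : v \in S0 -> u 0 (enum_rank v) = 0.
  move=> vS; set l := enum_rank_in vS v.
  have ev : enum_val l = v by rewrite /l enum_rankK_in.
  have /rowP/(_ l) := aM; rewrite !mxE => h; rewrite -[RHS]h.
  under eq_bigr do rewrite mxE mulr_suml.
  rewrite exchange_big /=; apply: eq_bigr => j _; rewrite /M mxE [X in _ = _ * X]mxE ev.
  rewrite (bigD1 (enum_val j)) //= eqxx mulr1 big1 ?addr0 // => i /negbTE hi.
  by rewrite eq_sym hi mulr0 mul0r.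
have HC := hardyC u0.
rewrite (qf_entries wok) nrm_entries in HC.
have HR : \sum_i beta b i <= delta2sq w part * \sum_i rr w i * beta b i.
  by rewrite -toC_le rmorphM; exact: HC.
have d0 := d2_gt0 wok surj Kpos n1.
set B := \sum_i beta b i in HR.
set Q := \sum_i rr w i * beta b i in HR.
have B0 : 0 <= B by apply: sumr_ge0 => i _; apply: beta_ge0.
have hQ : 0 < c * B - Q.
  have -> : c * B - Q = \sum_i (c - rr w i) * beta b i.
    rewrite /B /Q mulr_sumr -sumrB; apply: eq_bigr => i _; ring.
  rewrite (bigD1 (enum_val j1)) //=.
  apply: ltr_wpDr.
    apply: sumr_ge0 => i _; case: (boolP (i \in J)) => iJ.
      apply: mulr_ge0; last exact: beta_ge0.
      by move: iJ; rewrite inE subr_ge0 => /ltW.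
    by rewrite /beta b0 // normr0 expr0n /= mulr0.
  apply: mulr_gt0; first by have := enum_valP j1; rewrite inE subr_gt0.
  by apply: beta_gt0; rewrite bE.
have h2 : delta2sq w part * Q < delta2sq w part * (c * B).
  by rewrite ltr_pM2l // -subr_gt0.
have h3 : delta2sq w part * (c * B) = B / 2.
  by rewrite /c mulrA; field; rewrite gt_eqF.
apply: (half_contra B0); rewrite -h3; exact: le_lt_trans HR h2.
Qed.

Lemma sorted_last_ge (s : seq R) x : sorted <%R s -> x \in s -> x <= last 0 s.
Proof.
case: s => [//|y s] /=.
elim: s y x => [|z s IH] y x /=; first by rewrite inE => _ /eqP ->.
move=> /andP[yz ps]; rewrite inE => /orP[/eqP ->|xs].
  by apply: le_trans (ltW yz) _; apply: IH => //; exact: mem_head.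
exact: IH.
Qed.

Lemma rr_le_max i : rr w i <= lambda_max w.
Proof.
rewrite /lambda_max char_lap_seq //.
set p := \prod_(x <- rseq w) ('X - x%:P).
have p0 : p != 0 by rewrite monic_neq0 // monic_prod_XsubC.
apply: sorted_last_ge; first exact: sorted_roots.
rewrite -roots_on_rootsR // root_prod_XsubC in_itv /=.
by apply: map_f; exact: mem_enum.
Qed.

End Main.

Local Close Scope sesquilinear_scope.

Theorem theorem3p3 (R : realType) (V : finType) (w : V -> V -> R)
    (n : nat) (part : V -> 'I_n.+1) :
  weight_ok w -> connected_w w ->
  (forall m : 'I_n.+1, exists v, part v = m) ->
  (forall m, leq m.+1 n -> 0 < Km w part m) ->
  let d2 := delta2sq w part in
  leq (eig_count w (fun x => (0 <= x) && ((d2 == 0) || (x < (2 * d2)^-1))))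
      #|Spart part 0| /\
  leq (#|V| - #|Spart part 0|)
      (eig_count w (fun x => [&& d2 != 0, (2 * d2)^-1 <= x & x <= lambda_max w])).
Proof.
move=> wok _ surj Kpos d2.
rewrite !(eig_count_eq wok) /rseq !count_map.
case: n part surj Kpos @d2 => [|n] part surj Kpos d2.
  have S0T : Spart part 0 = [set: V].
    by apply/setP => v; rewrite !inE; case: (part v) => [[]].
  rewrite S0T cardsT subnn; split => //.
  by apply: leq_trans (count_size _ _) _; rewrite -enumT size_enum_ord.
have d0 : 0 < d2 := d2_gt0 wok surj Kpos (ltn0Sn n).
have hk := key_count wok surj Kpos (ltn0Sn n).
rewrite -count_card in hk.
rewrite (gt_eqF d0) /=; split.
  rewrite -enumT; apply: leq_trans hk; apply: sub_count => i /=; by case/andP.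
rewrite -enumT.
rewrite (eq_count (a2 := predC (fun i => rr w i < (2 * d2)^-1))); last first.
  by move=> i /=; rewrite (rr_le_max wok) andbT leNgt.
have := count_predC (fun i => rr w i < (2 * d2)^-1) (enum 'I_#|V|).
rewrite size_enum_ord /d2 => e.
move: hk e; rewrite /d2.
set x := count _ _; set y := count _ _ => hk e.
rewrite -e; apply: leq_trans (leq_sub2l _ hk) _.
by rewrite addKn.
Qed.
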